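(* Let $g\in\mathbf{Sp}(2n,\mathbb Z)$ and $m\ge1$. (1) If $g\in\Gamma(m)$ then $\tau(g)g^{-1}\in\Gamma(2m)$. (2) If $g\in\Gamma(2m)$ then $\tau(g)g\in\Gamma(4m)$. (3) If $\tau(g)g^{-1}\in\Gamma(4m)$ then $g=\beta u$ for some $\beta\in\Gamma_{2m}(2)$ and some $u\in\mathbf{GL}(n,\mathbb Z)$.
   Context: $\mathbf{Sp}(2n,\mathbb Z)$: integral matrices $g=\begin{pmatrix}A&B\\C&D\end{pmatrix}$ with ${}^tgJg=J$, $J=\begin{pmatrix}0&I\\-I&0\end{pmatrix}$. $\tau\begin{pmatrix}A&B\\C&D\end{pmatrix}=\begin{pmatrix}A&-B\\-C&D\end{pmatrix}$. $\Gamma(N)=\{\gamma\in\mathbf{Sp}(2n,\mathbb Z):\gamma\equiv I\bmod N\}$ (so $\Gamma(1)=\mathbf{Sp}(2n,\mathbb Z)$). $\Gamma_{2m}(2)=\{\begin{pmatrix}A&B\\C&D\end{pmatrix}\in\mathbf{Sp}(2n,\mathbb Z):A,D\equiv I\bmod2,\ B,C\equiv0\bmod2m\}$. $\mathbf{GL}(n,\mathbb Z)$ is embedded in $\mathbf{Sp}(2n,\mathbb Z)$ via $U\mapsto\mathrm{diag}(U,{}^tU^{-1})$. *)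

(* Defs.v *)
From mathcomp Require Import all_boot all_order all_algebra.
Set Implicit Arguments. Unset Strict Implicit. Unset Printing Implicit Defensive.
Import Order.TTheory GRing.Theory Num.Theory.
Local Open Scope ring_scope.

Definition Jmx (n : nat) : 'M[int]_(n + n) := block_mx 0 1%:M (- 1%:M) 0.

Definition symplectic (n : nat) (g : 'M[int]_(n + n)) : Prop :=
  g^T *m Jmx n *m g = Jmx n.

Definition tau (n : nat) (g : 'M[int]_(n + n)) : 'M[int]_(n + n) :=
  block_mx (ulsubmx g) (- ursubmx g) (- dlsubmx g) (drsubmx g).

Definition mx_congr (p q : nat) (N : int) (A B : 'M[int]_(p, q)) : Prop :=
  forall i j, (A i j = B i j %[mod N])%Z.

Definition Gamma (n : nat) (N : int) (g : 'M[int]_(n + n)) : Prop :=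
  symplectic g /\ mx_congr N g 1%:M.

Definition Gamma2 (n : nat) (m : nat) (g : 'M[int]_(n + n)) : Prop :=
  [/\ symplectic g,
      mx_congr 2 (ulsubmx g) 1%:M, mx_congr 2 (drsubmx g) 1%:M,
      mx_congr (2 * m)%:Z (ursubmx g) 0 & mx_congr (2 * m)%:Z (dlsubmx g) 0].

Definition GLemb (n : nat) (U : 'M[int]_n) : 'M[int]_(n + n) :=
  block_mx U 0 0 (invmx U)^T.

(* Main.v *)
Require Import Defs.
From mathcomp Require Import all_boot all_order all_algebra.
Import GRing.Theory Num.Theory.
From mathcomp Require Import zify.
Set Implicit Arguments. Unset Strict Implicit.
Local Open Scope ring_scope.

Lemma congrP (N : int) p q (A B : 'M[int]_(p,q)) :
  mx_congr N A B <-> exists X, A = B + N *: X.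
Proof.
split.
- move=> H; exists (\matrix_(i,j) ((A i j - B i j) %/ N)%Z).
  apply/matrixP => i j; rewrite !mxE.
  have := H i j; move/eqP; rewrite eqz_mod_dvd => /divzK.
  by rewrite mulrC => ->; rewrite addrC subrK.
- case=> X -> i j; rewrite !mxE.
  by rewrite addrC mulrC modzMDl.
Qed.

Definition phi2 p q (A : 'M[int]_(p,q)) : 'M['F_2]_(p,q) := map_mx (fun z : int => z%:~R) A.
Arguments phi2 {p q}.

Lemma F2_2 : (2%:R : 'F_2) = 0.
Proof. by apply/val_inj. Qed.

Lemma F2_1 (x : 'F_2) : x != 0 -> x = 1.
Proof. case: x => [[|[|k]] Hk] //= _; apply/val_inj => //. Qed.

Lemma F2_int0 (z : int) : (z%:~R : 'F_2) = 0 -> (2 %| z)%Z.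
Proof.
move=> H; apply/dvdz_mod0P.
have Hz := divz_eq z 2.
have Hge := modz_ge0 z (isT : (2:int) != 0).
have Hlt := ltz_pmod z (isT : (0:int) < 2).
move: H; rewrite {1}Hz rmorphD rmorphM /= .
have -> : ((2:int)%:~R : 'F_2) = 0 by rewrite -F2_2.
rewrite mulr0 add0r.
move: Hge Hlt; case: (z %% 2)%Z => [[|[|k]]|k] //=.

Qed.

Lemma phi2M p q r (A : 'M[int]_(p,q)) (B : 'M[int]_(q,r)) : phi2 (A *m B) = phi2 A *m phi2 B.
Proof. exact: map_mxM. Qed.
Lemma phi2D p q (A B : 'M[int]_(p,q)) : phi2 (A + B) = phi2 A + phi2 B.
Proof. exact: map_mxD. Qed.
Lemma phi2Z p q (c : int) (A : 'M[int]_(p,q)) : phi2 (c *: A) = (c%:~R) *: phi2 A.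
Proof. exact: map_mxZ. Qed.
Lemma phi21 p : phi2 (1%:M : 'M[int]_p) = 1%:M.
Proof. exact: map_mx1. Qed.
Lemma phi2T p q (A : 'M[int]_(p,q)) : phi2 A^T = (phi2 A)^T.
Proof. by rewrite /phi2 map_trmx. Qed.

Lemma phi2_2m p q m (X : 'M[int]_(p,q)) : phi2 ((2 * m)%N%:Z *: X) = 0.
Proof.
rewrite phi2Z PoszM rmorphM /=.
have -> : ((2:int)%:~R : 'F_2) = 0 by rewrite -F2_2.
by rewrite mul0r scale0r.
Qed.

Lemma congr2P p q (A B : 'M[int]_(p,q)) : mx_congr 2 A B <-> phi2 A = phi2 B.
Proof.
split.
- case/congrP=> X ->; rewrite phi2D.
  rewrite phi2Z.
  have -> : ((2:int)%:~R : 'F_2) = 0 by rewrite -F2_2.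
  by rewrite scale0r addr0.
- move=> H i j; apply/eqP; rewrite eqz_mod_dvd; apply: F2_int0.
  move/matrixP: H => /(_ i j); rewrite !mxE rmorphB /= => ->.
  by rewrite subrr.
Qed.

Definition Smx n : 'M[int]_(n + n) := block_mx 1%:M 0 0 (- 1%:M).

Lemma SS n : Smx n *m Smx n = 1%:M.
Proof.
by rewrite /Smx mulmx_block !mulmx0 !mul0mx !mulmx1 !addr0 !add0r mulNmx mulmxN opprK mulmx1 -scalar_mx_block.
Qed.

Lemma tauS n (g : 'M[int]_(n + n)) : tau g = Smx n *m g *m Smx n.
Proof.
rewrite /tau /Smx -[g in RHS]submxK !mulmx_block !mulmx0 !mul0mx !mulmx1 !mul1mx
  !mulmxN !mulNmx !addr0 !add0r !mulmx1 opprK.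
by rewrite !mul1mx.
Qed.

Lemma JJ n : Jmx n *m Jmx n = - 1%:M.
Proof.
rewrite /Jmx mulmx_block !mulmx0 !mul0mx !addr0 !add0r.
by rewrite mul1mx mulmx1 [in RHS]scalar_mx_block opp_block_mx oppr0.
Qed.

Lemma STJS n : (Smx n)^T *m Jmx n *m Smx n = - Jmx n.
Proof.
rewrite /Smx /Jmx tr_block_mx !trmx0 trmx1 linearN /= trmx1 !mulmx_block !mulmx0 !mul0mx !addr0 !add0r !mul0mx mulNmx mulmxN !mulmx1 !mul1mx opprK opp_block_mx !oppr0 opprK.
done.
Qed.

Lemma symp_unit n (g : 'M[int]_(n + n)) : symplectic g -> g \in unitmx.
Proof.
move=> Hs.
have H : (- (Jmx n *m g^T *m Jmx n)) *m g = 1%:M.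
  by rewrite mulNmx -!mulmxA (mulmxA g^T) Hs JJ opprK.
by case: (mulmx1_unit H).
Qed.

Lemma symp_mul n (g h : 'M[int]_(n + n)) : symplectic g -> symplectic h -> symplectic (g *m h).
Proof.
rewrite /symplectic => Hg Hh.
by rewrite trmx_mul -!mulmxA (mulmxA g^T) (mulmxA (g^T *m _)) Hg mulmxA.
Qed.

Lemma symp_inv n (g : 'M[int]_(n + n)) : symplectic g -> symplectic (invmx g).
Proof.
rewrite /symplectic => Hs; have Hu := symp_unit Hs.
have H1 : (invmx g)^T *m g^T = 1%:M by rewrite -trmx_mul mulmxV // trmx1.
rewrite -[Jmx n in LHS]Hs !mulmxA H1 mul1mx -mulmxA mulmxV // mulmx1.
done.
Qed.

Lemma symp_tau n (g : 'M[int]_(n + n)) : symplectic g -> symplectic (tau g).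
Proof.
rewrite /symplectic tauS => Hs.
rewrite !trmx_mul.
have -> : (Smx n)^T *m (g^T *m (Smx n)^T) *m Jmx n *m (Smx n *m g *m Smx n)
   = (Smx n)^T *m (g^T *m ((Smx n)^T *m Jmx n *m Smx n) *m g) *m Smx n by rewrite !mulmxA.
by rewrite STJS mulmxN mulNmx Hs mulmxN mulNmx STJS opprK.
Qed.

Lemma tau_lin n (c : int) (X : 'M[int]_(n + n)) : tau (1%:M + c *: X) = 1%:M + c *: tau X.
Proof.
by rewrite !tauS mulmxDr mulmxDl mulmx1 SS -scalemxAr -scalemxAl.
Qed.

Lemma tau_sub n (X : 'M[int]_(n + n)) :
  tau X - X = 2 *: block_mx 0 (- ursubmx X) (- dlsubmx X) 0.
Proof.
rewrite /tau -[X in _ - X]submxK opp_block_mx add_block_mx scale_block_mx !scaler0 !subrr.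
by rewrite -!mulr2n -!scaler_nat.
Qed.

Lemma tau_add n (X : 'M[int]_(n + n)) :
  tau X + X = 2 *: block_mx (ulsubmx X) 0 0 (drsubmx X).
Proof.
rewrite /tau -[X in _ + X]submxK add_block_mx scale_block_mx !scaler0 !addNr.
by rewrite -!mulr2n -!scaler_nat.
Qed.

Lemma part1 n m (g : 'M[int]_(n+n)) :
  symplectic g -> Gamma m%:Z g -> Gamma (2 * m)%:Z (tau g *m invmx g).
Proof.
move=> Hs [_ /congrP [X HX]]; split.
  by apply: symp_mul; [apply: symp_tau | apply: symp_inv].
apply/congrP.
exists ((block_mx 0 (- ursubmx X) (- dlsubmx X) 0) *m (invmx g)).
have Hu := symp_unit Hs.
have E : tau g = g + (tau g - g) by rewrite addrC subrK.
rewrite E mulmxDl mulmxV //; congr (_ + _).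
have E2 : tau g - g = m%:Z *: (tau X - X).
  by rewrite HX tau_lin opprD addrACA subrr add0r scalerBr.
rewrite E2 tau_sub scalerA -scalemxAl PoszM (mulrC m%:Z).
done.
Qed.

Lemma part2 n m (g : 'M[int]_(n+n)) :
  symplectic g -> Gamma (2 * m)%:Z g -> Gamma (4 * m)%:Z (tau g *m g).
Proof.
move=> Hs [_ /congrP [X HX]]; split.
  by apply: symp_mul; [apply: symp_tau |].
apply/congrP.
exists (block_mx (ulsubmx X) 0 0 (drsubmx X) + m%:Z *: (tau X *m X)).
rewrite HX tau_lin mulmxDl mul1mx mulmxDr mulmx1 -scalemxAl -scalemxAr scalerA.
rewrite -!addrA; congr (_ + _).
rewrite addrA -scalerDr (addrC X) tau_add scalerA scalerDr scalerA.
congr (_ *: _ + _ *: _).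
  lia.
lia.
Qed.

Lemma diagF2 k (D : 'M['F_2]_k) :
  (forall i j, i != j -> D i j = 0) -> D \in unitmx -> D = 1%:M.
Proof.
move=> Hd Hu.
have ED : D = diag_mx (\row_i D i i).
  apply/matrixP => i j; rewrite !mxE; case: (eqVneq i j) => [->|/Hd //].
  by rewrite mulr1n.
move: Hu; rewrite ED unitmxE det_diag unitfE => /prodf_neq0 H.
apply/matrixP => i j; rewrite !mxE; case: (eqVneq i j) => [->|] //=.
have := H j isT; rewrite !mxE => /F2_1 ->.
done.
Qed.

Lemma cancel2 p q (A B : 'M[int]_(p,q)) : 2 *: A = 2 *: B -> A = B.
Proof.
move/matrixP=> H; apply/matrixP => i j; have := H i j; rewrite !mxE.
by apply: mulfI.
Qed.

Lemma symp_blocks n (A B C D : 'M[int]_n) :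
  symplectic (block_mx A B C D) -> A^T *m D - C^T *m B = 1%:M.
Proof.
rewrite /symplectic /Jmx tr_block_mx !mulmx_block !mulmx0 ?mul0mx !addr0 ?add0r.
case/eq_block_mx=> _ H _ _; rewrite -H.
by rewrite !mulmx1 !mulmxN !mulNmx mulmx1 addrC.
Qed.

Lemma symp_diag n (P Q : 'M[int]_n) :
  P^T *m Q = 1%:M -> Q^T *m P = 1%:M -> symplectic (block_mx P 0 0 Q).
Proof.
move=> H1 H2.
rewrite /symplectic /Jmx tr_block_mx !trmx0 !mulmx_block !mulmx0 !mul0mx !addr0 !add0r.
by rewrite !mul0mx !mulmx1 mulmxN mulmx1 mulNmx H1 H2.
Qed.

Lemma part3 n m (g : 'M[int]_(n+n)) :
  symplectic g -> Gamma (4 * m)%:Z (tau g *m invmx g) ->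
  exists (beta : 'M[int]_(n + n)) (U : 'M[int]_n),
    [/\ Gamma2 m beta, U \in unitmx & g = beta *m GLemb U].
Proof.
move=> Hs [_ /congrP [Z HZ]].
have Hu := symp_unit Hs.
have E : tau g - g = (4 * m)%N%:Z *: (Z *m g).
  have : tau g = (tau g *m invmx g) *m g by rewrite -mulmxA mulVmx // mulmx1.
  rewrite HZ mulmxDl mul1mx -scalemxAl => ->.
  by rewrite (addrC g) addrK.
rewrite tau_sub -[Z *m g]submxK !scale_block_mx in E.
case/eq_block_mx: E => _ EB EC _.
have HB : ursubmx g = (2 * m)%N%:Z *: (- ursubmx (Z *m g)).
  apply: cancel2; rewrite -[LHS]opprK -scalerN EB !scalerN scalerA.
  congr (- (_ *: _)); lia.
have HC : dlsubmx g = (2 * m)%N%:Z *: (- dlsubmx (Z *m g)).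
  apply: cancel2; rewrite -[LHS]opprK -scalerN EC !scalerN scalerA.
  congr (- (_ *: _)); lia.
set A := ulsubmx g; set D := drsubmx g.
have Hsb := symp_blocks (n := n) (A := A) (B := ursubmx g) (C := dlsubmx g) (D := D).
rewrite submxK in Hsb; have {}Hsb := Hsb Hs.
have HAD : (phi2 A)^T *m phi2 D = 1%:M.
  have := congr1 phi2 Hsb.
  by rewrite phi2D phi21 -scaleN1r phi2Z HB phi2M phi2M phi2_2m mulmx0 scaler0 addr0 phi2T.
have HAu : phi2 A \in unitmx.
  by case: (mulmx1_unit HAD); rewrite unitmx_tr.
case: (int_Smith_normal_form A) => L uL [R uR [d _ HA]].
set Dm := \matrix_(i, j) _ in HA.
have Lu : phi2 L \in unitmx.
  have H : phi2 L *m phi2 (invmx L) = 1%:M by rewrite -phi2M mulmxV // phi21.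
  by case: (mulmx1_unit H).
have HDm : phi2 Dm = 1%:M.
  apply: diagF2.
    move=> i j /negbTE nij; rewrite /phi2 !mxE.
    have -> : (i == j :> nat) = false by apply/negbTE; apply: contraFneq nij => /val_inj ->.
    by rewrite mulr0n.
  move: HAu; rewrite HA !phi2M !unitmx_mul.
  by case/andP => /andP [].
set U := L *m R.
have Uu : U \in unitmx by rewrite unitmx_mul uL uR.
have HU : phi2 U = phi2 A by rewrite HA !phi2M HDm mulmx1.
exists (g *m block_mx (invmx U) 0 0 U^T), U.
have Eb : g *m block_mx (invmx U) 0 0 U^T =
    block_mx (A *m invmx U) (ursubmx g *m U^T) (dlsubmx g *m invmx U) (D *m U^T).
  by rewrite -{1}[g]submxK mulmx_block !mulmx0 !addr0 !add0r.
split => //.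
- split.
  + apply: symp_mul => //; apply: symp_diag.
      by rewrite -trmx_mul mulmxV // trmx1.
    by rewrite trmxK mulmxV.
  + rewrite Eb block_mxKul; apply/congr2P.
    by rewrite phi2M -HU -phi2M mulmxV.
  + rewrite Eb block_mxKdr; apply/congr2P.
    by rewrite phi2M phi2T HU phi21 (mulmx1C HAD).
  + rewrite Eb block_mxKur HB; apply/congrP; exists (- ursubmx (Z *m g) *m U^T).
    by rewrite add0r scalemxAl.
  + rewrite Eb block_mxKdl HC; apply/congrP; exists (- dlsubmx (Z *m g) *m invmx U).
    by rewrite add0r scalemxAl.
- rewrite /GLemb -mulmxA mulmx_block !mulmx0 !mul0mx !addr0 !add0r mulVmx //.
  by rewrite -trmx_mul mulVmx // trmx1 -scalar_mx_block mulmx1.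
Qed.

Unset Implicit Arguments.

Theorem lemma4p5 (n : nat) (g : 'M[int]_(n + n)) (m : nat) :
  symplectic g -> (0 < m)%N ->
  [/\ (Gamma m%:Z g -> Gamma (2 * m)%:Z (tau g *m invmx g)),
      (Gamma (2 * m)%:Z g -> Gamma (4 * m)%:Z (tau g *m g)) &
      (Gamma (4 * m)%:Z (tau g *m invmx g) ->
         exists (beta : 'M[int]_(n + n)) (U : 'M[int]_n),
           [/\ Gamma2 m beta, U \in unitmx & g = beta *m GLemb U])].
Proof.
move=> Hs _; split; [exact: part1 | exact: part2 | exact: part3].
Qed.
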